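(* Let $t$ be a positive integer and let $M$ be a $t$-spike with associated partition $(A_1,\ldots,A_r)$. Then, for every partition $(J,K)$ of $\{1,\dots,r\}$ with $|J| \le |K|$, $$\lambda\left(\bigcup_{j \in J} A_j\right) = \begin{cases} 2|J| & \text{if } |J| < t,\\ 2t-2 & \text{if } |J| \ge t.\end{cases}$$
   Context: For a positive integer $t$, a matroid $M$ is a $t$-spike of order $r$ (where $r\ge t$) if there is a partition $(A_1,\ldots,A_r)$ of $E(M)$ into 2-element sets, called the associated partition, such that, for every $t$-element subset $J\subseteq\{1,\dots,r\}$, the set $\bigcup_{j\in J}A_j$ is both a circuit and a cocircuit of $M$. The connectivity function of a matroid $M$ with ground set $E$ is $\lambda(X) = r(X) + r(E-X) - r(M)$ for $X\subseteq E$. *)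

(* Defs.v *)
From mathcomp Require Import all_boot.
Set Implicit Arguments. Unset Strict Implicit. Unset Printing Implicit Defensive.

(* A matroid on the finite ground set [T] (E(M) = all of T), given by its rank
   function satisfying the standard rank axioms (R1)-(R3). *)
Record matroid (T : finType) := Matroid {
  rk : {set T} -> nat;
  rk_bound : forall X : {set T}, rk X <= #|X|;
  rk_mono : forall X Y : {set T}, X \subset Y -> rk X <= rk Y;
  rk_submod : forall X Y : {set T}, rk (X :|: Y) + rk (X :&: Y) <= rk X + rk Y
}.

Section MatroidDefs.
Variables (T : finType) (M : matroid T).

Definition dependent (X : {set T}) : bool := rk M X < #|X|.

Definition circuit (C : {set T}) : bool :=
  dependent C && [forall D : {set T}, (D \proper C) ==> ~~ dependent D].

(* codependent set: dependent in the dual matroid, i.e. r(E - X) < r(E) *)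
Definition codependent (X : {set T}) : bool := rk M (~: X) < rk M setT.

Definition cocircuit (C : {set T}) : bool :=
  codependent C && [forall D : {set T}, (D \proper C) ==> ~~ codependent D].

Definition conn (X : {set T}) : nat := rk M X + rk M (~: X) - rk M setT.

End MatroidDefs.

Definition is_spike (T : finType) (M : matroid T) (t r : nat)
    (A : 'I_r -> {set T}) : Prop :=
  [/\ t <= r,
      (forall i, #|A i| = 2),
      (forall i j, i != j -> [disjoint A i & A j]),
      (\bigcup_(i < r) A i = setT) &
      (forall J : {set 'I_r}, #|J| = t ->
         circuit M (\bigcup_(j in J) A j) /\ cocircuit M (\bigcup_(j in J) A j))].
Arguments is_spike {T} M t r A.

(* Main.v *)
Require Import Defs.
From mathcomp Require Import all_boot.
From mathcomp Require Import zify.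

Set Implicit Arguments. Unset Strict Implicit. Unset Printing Implicit Defensive.

Lemma sub_of_card (U : finType) (B : {set U}) n :
  n <= #|B| -> exists C : {set U}, C \subset B /\ #|C| = n.
Proof.
elim: n => [|n IH] H.
  by exists set0; rewrite sub0set cards0.
have [C [CB cC]] := IH (ltnW H).
have : B :\: C != set0.
  apply/negP => /eqP E.
  have : #|B| <= #|C| by apply: subset_leq_card; rewrite -setD_eq0 E.
  lia.
case/set0Pn => x; rewrite inE => /andP [xC xB].
exists (x |: C); split.
  by rewrite subUset sub1set xB CB.
by rewrite cardsU1 xC cC.
Qed.

Section Gen.
Variables (T : finType) (M : matroid T).
Local Notation rk := (rk M).

Lemma unit_incr (a : T) (S : {set T}) : rk (a |: S) <= rk S + 1.
Proof.
have := rk_submod M [set a] S.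
have := rk_bound M [set a]; rewrite cards1. lia.
Qed.

Lemma circ_dep C : circuit M C -> rk C < #|C|.
Proof. by case/andP. Qed.

Lemma circ_min C (D : {set T}) : circuit M C -> D \proper C -> rk D = #|D|.
Proof.
case/andP => _ /forallP H P.
have := H D; rewrite P /= /dependent -leqNgt => H1.
have := rk_bound M D. lia.
Qed.

Lemma circ_rk C : circuit M C -> rk C = #|C| - 1.
Proof.
move=> HC.
have H1 := circ_dep HC.
have : C != set0 by rewrite -card_gt0; lia.
case/set0Pn => x xC.
have H2 := circ_min HC (properD1 xC).
have H3 : rk (C :\ x) <= rk C by apply: rk_mono; apply: subsetDl.
have := cardsD1 x C; rewrite xC. lia.
Qed.

Lemma cocirc_rk D : cocircuit M D -> rk (~: D) < rk setT.
Proof. by case/andP. Qed.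

Lemma cocirc_min D (D' : {set T}) : cocircuit M D -> D' \proper D -> rk (~: D') = rk setT.
Proof.
case/andP => _ /forallP H P.
have := H D'; rewrite P /= /codependent -leqNgt => H1.
have : rk (~: D') <= rk setT by apply: rk_mono; apply: subsetT.
lia.
Qed.

Lemma circ_step C b (S : {set T}) : circuit M C -> b \in C -> C :\ b \subset S ->
  rk (b |: S) <= rk S.
Proof.
move=> HC bC sub.
have := rk_submod M S C.
have H1 : rk (b |: S) <= rk (S :|: C).
  apply: rk_mono; rewrite subUset sub1set inE bC orbT /=; apply: subsetUl.
have H2 : rk (C :\ b) <= rk (S :&: C).
  by apply: rk_mono; rewrite subsetI sub subsetDl.
have H3 := circ_min HC (properD1 bC).
have H4 := circ_rk HC.
have := cardsD1 b C; rewrite bC. lia.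
Qed.

Lemma cocirc_step D b (Y : {set T}) : cocircuit M D -> b \in D -> b \in Y ->
  Y :\ b \subset ~: D -> rk (Y :\ b) + 1 <= rk Y.
Proof.
move=> HD bD bY sub.
have := rk_submod M Y (~: D).
have H0 := cocirc_rk HD.
have H1 := cocirc_min HD (properD1 bD).
have H2 : rk (~: (D :\ b)) <= rk (Y :|: ~: D).
  apply: rk_mono; apply/subsetP => x; rewrite !inE negb_and negbK.
  by case/orP => [/eqP -> | ->]; rewrite ?bY ?orbT.
have H3 : rk (Y :\ b) <= rk (Y :&: ~: D).
  by apply: rk_mono; rewrite subsetI sub subsetDl.
lia.
Qed.

End Gen.

Section Spike.
Variables (T : finType) (M : matroid T) (t r : nat) (A : 'I_r -> {set T}).
Hypothesis Ht : 0 < t.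
Hypothesis Htr : t <= r.
Hypothesis Hcard : forall i, #|A i| = 2.
Hypothesis Hdisj : forall i j, i != j -> [disjoint A i & A j].
Hypothesis Hcov : \bigcup_(i < r) A i = setT.
Hypothesis Hcc : forall J : {set 'I_r}, #|J| = t ->
         circuit M (\bigcup_(j in J) A j) /\ cocircuit M (\bigcup_(j in J) A j).
Local Notation X J := (\bigcup_(j in J) A j).
Local Notation rk := (rk M).

Lemma memX x i (J : {set 'I_r}) : x \in A i -> (x \in X J) = (i \in J).
Proof.
move=> xi; apply/bigcupP/idP.
  case=> j jJ xj; case: (eqVneq i j) => [->//|ne].
  by have := disjointFr (Hdisj ne) xi; rewrite xj.
by move=> iJ; exists i.
Qed.

Lemma card_X (J : {set 'I_r}) : #|X J| = 2 * #|J|.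
Proof.
have [n HJ] : exists n, #|J| = n by eexists.
rewrite HJ; elim: n J HJ => [|n IH] J HJ.
  by move/eqP: HJ; rewrite cards_eq0 => /eqP ->; rewrite big_set0 cards0.
have : J != set0 by rewrite -card_gt0 HJ.
case/set0Pn => k kJ.
have HJ' : #|J :\ k| = n by have := cardsD1 k J; rewrite kJ HJ; lia.
rewrite -(setD1K kJ) big_setU1 ?inE ?eqxx //=.
have I0 : A k :&: X (J :\ k) = set0.
  apply/setP => x; rewrite !inE; case xA: (x \in A k) => //=.
  by rewrite (memX _ xA) !inE eqxx.
have := cardsUI (A k) (X (J :\ k)); rewrite I0 cards0 Hcard IH //. rewrite addn0 => ->; by rewrite mulnS.
Qed.

Lemma XC (J : {set 'I_r}) : ~: X J = X (~: J).
Proof.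
apply/setP => x.
have : x \in [set: T] by rewrite inE.
rewrite -Hcov => /bigcupP [i _ xi].
by rewrite inE !(memX _ xi) inE.
Qed.

Lemma X_proper (J L : {set 'I_r}) : J \proper L -> X J \proper X L.
Proof.
rewrite !properEcard !card_X => /andP [JL cJL]; apply/andP; split; last lia.
apply/subsetP => x /bigcupP [i iJ xi]; rewrite (memX _ xi).
exact: (subsetP JL).
Qed.

Lemma ext (J : {set 'I_r}) : #|J| <= t -> exists L : {set 'I_r}, J \subset L /\ #|L| = t.
Proof.
move=> HJ.
have HC : t - #|J| <= #|~: J| by have := cardsC J; rewrite card_ord; lia.
have [C [CJ cC]] := sub_of_card HC.
exists (J :|: C); split; first exact: subsetUl.
have I0 : J :&: C = set0.
  apply/setP => x; rewrite !inE; case xJ: (x \in J) => //=.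
  by apply/negP => /(subsetP CJ); rewrite inE xJ.
have := cardsUI J C; rewrite I0 cards0 cC. lia.
Qed.

Lemma indep (J : {set 'I_r}) : #|J| < t -> rk (X J) = 2 * #|J|.
Proof.
move=> HJ; have [L [JL cL]] := ext (ltnW HJ).
have P : J \proper L by rewrite properEcard JL cL.
by rewrite (circ_min (Hcc cL).1 (X_proper P)) card_X.
Qed.

Lemma coindep (J : {set 'I_r}) : #|J| < t -> rk (~: X J) = rk setT.
Proof.
move=> HJ; have [L [JL cL]] := ext (ltnW HJ).
have P : J \proper L by rewrite properEcard JL cL.
exact: (cocirc_min (Hcc cL).2 (X_proper P)).
Qed.

Lemma primal_step k (J L0 : {set 'I_r}) : k \notin J -> L0 \subset J ->
  #|L0| = t.-1 -> rk (X (k |: J)) <= rk (X J) + 1.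
Proof.
move=> kJ L0J cL0.
have kL0 : k \notin L0 by apply/negP => /(subsetP L0J); rewrite (negbTE kJ).
have cK : #|k |: L0| = t by rewrite cardsU1 kL0 cL0; lia.
have HC := (Hcc cK).1.
have /cards2P [a [b [ab Ak]]] : #|A k| == 2 by rewrite Hcard.
have bA : b \in A k by rewrite Ak !inE eqxx orbT.
have aA : a \in A k by rewrite Ak !inE eqxx.
have bC : b \in X (k |: L0) by rewrite (memX _ bA) setU11.
have sub : X (k |: L0) :\ b \subset a |: X J.
  apply/subsetP => x; rewrite !inE => /andP [xb /bigcupP [i]].
  rewrite !inE => /orP [/eqP -> | iL0] xi.
    by move: xi; rewrite Ak !inE (negbTE xb) orbF => ->.
  by rewrite (memX _ xi) (subsetP L0J _ iL0) orbT.
have H1 := circ_step HC bC sub.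
have H2 := unit_incr M a (X J).
have H3 : rk (X (k |: J)) <= rk (b |: (a |: X J)).
  apply: rk_mono; apply/subsetP => x /bigcupP [i].
  rewrite !inE => /orP [/eqP -> | iJ] xi.
    by move: xi; rewrite Ak !inE => /orP [] ->; rewrite ?orbT.
  by rewrite (memX _ xi) iJ !orbT.
lia.
Qed.

Lemma dual_step k (L L0 : {set 'I_r}) : k \in L -> L0 \subset ~: L ->
  #|L0| = t.-1 -> rk (X (L :\ k)) + 1 <= rk (X L).
Proof.
move=> kL L0L cL0.
have kL0 : k \notin L0 by apply/negP => /(subsetP L0L); rewrite inE kL.
have cK : #|k |: L0| = t by rewrite cardsU1 kL0 cL0; lia.
have HD := (Hcc cK).2.
have /cards2P [a [b [ab Ak]]] : #|A k| == 2 by rewrite Hcard.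
have bA : b \in A k by rewrite Ak !inE eqxx orbT.
have aA : a \in A k by rewrite Ak !inE eqxx.
have bD : b \in X (k |: L0) by rewrite (memX _ bA) setU11.
have bY : b \in X L :\ a by rewrite !inE eq_sym ab (memX _ bA) kL.
have sub : (X L :\ a) :\ b \subset ~: X (k |: L0).
  apply/subsetP => x; rewrite !inE => /andP [xb /andP [xa /bigcupP [i iL xi]]].
  rewrite (memX _ xi) !inE negb_or; apply/andP; split.
    apply/negP => /eqP ik; move: xi; rewrite ik Ak !inE.
    by rewrite (negbTE xa) (negbTE xb).
  by apply/negP => /(subsetP L0L); rewrite inE iL.
have H1 := cocirc_step HD bD bY sub.
have H2 : rk (X (L :\ k)) <= rk ((X L :\ a) :\ b).
  apply: rk_mono; apply/subsetP => x /bigcupP [i].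
  rewrite !inE => /andP [ik iL] xi.
  rewrite (memX _ xi) iL andbT.
  apply/andP; split; apply/negP => /eqP E; subst x.
    by have := disjointFr (Hdisj ik) xi; rewrite bA.
  by have := disjointFr (Hdisj ik) xi; rewrite aA.
have H3 : rk (X L :\ a) <= rk (X L) by apply: rk_mono; apply: subsetDl.
lia.
Qed.

Lemma Grank n (L : {set 'I_r}) : #|L| = t + n -> t.-1 <= #|~: L| ->
  rk (X L) = #|L| + t - 1.
Proof.
elim: n L => [|n IH] L cL cC.
  have cL0 : #|L| = t by rewrite cL addn0.
  rewrite (circ_rk (Hcc cL0).1) card_X; lia.
have : L != set0 by rewrite -card_gt0 cL; lia.
case/set0Pn => k kL.
have cL' : #|L :\ k| = t + n by have := cardsD1 k L; rewrite kL cL; lia.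
have cC' : t.-1 <= #|~: (L :\ k)|.
  have := cardsC L; have := cardsC (L :\ k); lia.
have IHL := IH _ cL' cC'.
have [L0 [L0s cL0]] : exists L0 : {set 'I_r}, L0 \subset L :\ k /\ #|L0| = t.-1.
  by apply: sub_of_card; lia.
have P' : rk (X L) <= rk (X (L :\ k)) + 1.
  have := primal_step (k := k) (J := L :\ k) (L0 := L0); rewrite setD1K //.
  by apply => //; rewrite !inE eqxx.
have [L1 [L1s cL1]] := sub_of_card cC.
have D := dual_step kL L1s cL1.
lia.
Qed.

End Spike.

Theorem lemma6p4 (T : finType) (M : matroid T) (t r : nat)
    (A : 'I_r -> {set T}) :
  0 < t -> is_spike M t r A ->
  forall J K : {set 'I_r}, J :&: K = set0 -> J :|: K = setT -> #|J| <= #|K| ->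
  conn M (\bigcup_(j in J) A j) = (if #|J| < t then 2 * #|J| else 2 * t - 2).
Proof.
move=> Ht [Htr Hcard Hdisj Hcov Hcc] J K I0 U0 JK.
have EK : K = ~: J.
  apply/setP => x; move/setP: I0 => /(_ x); move/setP: U0 => /(_ x).
  rewrite !inE; by case: (x \in J); case: (x \in K).
have cJK : #|J| + #|K| = r by rewrite EK cardsC card_ord.
rewrite /conn.
case: ltnP => HJ.
  have H1 := indep Ht Htr Hcard Hdisj Hcc HJ.
  have H2 := coindep Ht Htr Hcard Hdisj Hcc HJ.
  rewrite H1 H2. lia.
have XK : ~: (\bigcup_(j in J) A j) = \bigcup_(j in K) A j by rewrite EK (XC Hdisj Hcov).
rewrite XK.
have GJ := @Grank T M t r A Ht Htr Hcard Hdisj Hcc (#|J| - t) J.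
have GK := @Grank T M t r A Ht Htr Hcard Hdisj Hcc (#|K| - t) K.
have cJJ : #|~: J| = #|K| by rewrite EK.
have cKK : #|~: K| = #|J| by rewrite EK setCK.
rewrite cJJ in GJ. rewrite cKK in GK.
have [S [SK cS]] : exists S : {set 'I_r}, S \subset K /\ #|S| = t.-1 by apply: sub_of_card; lia.
have CS : #|S| < t by lia.
have R := coindep Ht Htr Hcard Hdisj Hcc CS.
rewrite (XC Hdisj Hcov) in R.
have cSC : #|~: S| = r - t.-1 by have := cardsC S; rewrite card_ord; lia.
have GS := @Grank T M t r A Ht Htr Hcard Hdisj Hcc (#|~: S| - t) (~: S).
rewrite setCK in GS.
have e1 : rk M (\bigcup_(j in J) A j) = #|J| + t - 1 by apply: GJ; lia.
have e2 : rk M (\bigcup_(j in K) A j) = #|K| + t - 1 by apply: GK; lia.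
have e3 : rk M (\bigcup_(j in ~: S) A j) = #|~: S| + t - 1.
  apply: GS; last by rewrite cS.
  rewrite cSC. clear -cJK JK HJ Ht. lia.
rewrite -R e1 e2 e3 cSC.
clear -cJK JK HJ Ht. lia.
Qed.
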